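(* Consider three agents $a,b,c$, each starting with an input value in $\{0,1\}$ (all $8$ input assignments are possible), communicating in the full-information iterated immediate snapshot model described in the context. For no number $R \ge 0$ of rounds does there exist a decision protocol solving the (0-)majority consensus task. That is, there is no family of functions $\delta_i$ ($i \in \{a,b,c\}$), mapping the possible final local states of agent $i$ after $R$ rounds to $\{0,1\}$, such that for every input assignment and every sequence of $R$ communication graphs from the immediate snapshot model, the output triple $(\delta_a(\ell_a),\delta_b(\ell_b),\delta_c(\ell_c))$ of the final local states satisfies both majority agreement and validity.
   Context: Agents: $\mathrm{Ag}=\{a,b,c\}$. A communication graph is a reflexive relation $G \subseteq \mathrm{Ag}\times\mathrm{Ag}$; write $j \to i$ for $(j,i)\in G$. Full-information dynamics: initially the local state of agent $i$ is its input value $x_i$. In a round with communication graph $G$, if the current local states are $(\ell_a,\ell_b,\ell_c)$, the new local state of agent $i$ is the tuple $(m_a,m_b,m_c)$ where $m_j=\ell_j$ if $j\to i$ in $G$ and $m_j=\bot$ (no message) otherwise. In each round a graph is chosen arbitrarily (independently of previous rounds) from the model's set of graphs. The immediate snapshot model is the set of $13$ graphs obtained as follows: for each ordered partition $(B_1,\dots,B_k)$ of $\mathrm{Ag}$ into nonempty blocks, $j\to i$ iff the block containing $j$ has index at most the index of the block containing $i$. Majority consensus task: each agent outputs a value in $\{0,1\}$ computed only from its final local state; (majority agreement) either all three outputs are equal, or a majority (at least two) of the outputs are $0$; (validity) every output value is one of the input values of the execution (in particular, if all inputs equal $v$ then all outputs equal $v$). *)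

(* Defs.v *)
From Stdlib Require Import List Bool Arith.
Import ListNotations.

Inductive agent : Type := Ag_a | Ag_b | Ag_c.

(* Full-information local states: initially an input value (bool, false = 0,
   true = 1); after a round, the triple (m_a, m_b, m_c) of received messages,
   None standing for "no message" (bottom). *)
Inductive lstate : Type :=
  | Inp : bool -> lstate
  | Msg : option lstate -> option lstate -> option lstate -> lstate.

(* A communication graph: G j i = true  iff  j -> i. *)
Definition graph := agent -> agent -> bool.

(* Immediate snapshot graphs: induced by an ordered partition (B_1,...,B_k)
   of the agents into nonempty blocks, encoded by the block index blk : agent
   -> nat whose image is exactly {0,...,k-1}; j -> i iff blk j <= blk i. *)
Definition is_IS_graph (G : graph) : Prop :=
  exists (k : nat) (blk : agent -> nat),
    (forall i, blk i < k) /\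
    (forall n, n < k -> exists i, blk i = n) /\
    (forall j i, G j i = Nat.leb (blk j) (blk i)).

Definition config := agent -> lstate.

Definition msg (G : graph) (s : config) (j i : agent) : option lstate :=
  if G j i then Some (s j) else None.

Definition step (s : config) (G : graph) : config :=
  fun i => Msg (msg G s Ag_a i) (msg G s Ag_b i) (msg G s Ag_c i).

Definition run (x : agent -> bool) (gs : list graph) : config :=
  fold_left step gs (fun i => Inp (x i)).

Definition majority_agreement (o : agent -> bool) : Prop :=
  (o Ag_a = o Ag_b /\ o Ag_b = o Ag_c) \/
  2 <= length (filter negb [o Ag_a; o Ag_b; o Ag_c]).

Definition validity (x o : agent -> bool) : Prop :=
  forall i, exists j, o i = x j.

(* Main.v *)
Require Import Defs.
From Stdlib Require Import List Bool Arith.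
From Stdlib Require Import ZArith Lia.
Import ListNotations.

Definition aeqb (x y : agent) : bool :=
  match x, y with
  | Ag_a, Ag_a | Ag_b, Ag_b | Ag_c, Ag_c => true
  | _, _ => false
  end.

Definition v2 (i j : agent) (ou ov : option lstate) : lstate :=
  let sel k := if aeqb k i then ou else if aeqb k j then ov else None in
  Msg (sel Ag_a) (sel Ag_b) (sel Ag_c).

Fixpoint K (d : agent -> lstate -> bool) (R : nat) (i j : agent) (u v : lstate) : Z :=
  match R with
  | 0 => if d i u && d j v then 1%Z else 0%Z
  | S R' =>
      (K d R' i j (v2 i j (Some u) None) (v2 i j (Some u) (Some v))
       - K d R' i j (v2 i j (Some u) (Some v)) (v2 i j (Some u) (Some v))
       + K d R' i j (v2 i j (Some u) (Some v)) (v2 i j None (Some v)))%Z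
  end.

Definition gr (x y z : nat) : graph :=
  fun j i =>
    let blk k := match k with Ag_a => x | Ag_b => y | Ag_c => z end in
    Nat.leb (blk j) (blk i).

Lemma gr_IS x y z k :
  (forall q, (match q with Ag_a => x | Ag_b => y | Ag_c => z end) < k) ->
  (forall n, n < k -> x = n \/ y = n \/ z = n) ->
  is_IS_graph (gr x y z).
Proof.
  intros H1 H2. exists k, (fun q => match q with Ag_a => x | Ag_b => y | Ag_c => z end).
  split; [exact H1|]. split; [|reflexivity].
  intros n Hn. destruct (H2 n Hn) as [E|[E|E]].
  - exists Ag_a; exact E.
  - exists Ag_b; exact E.
  - exists Ag_c; exact E.
Qed.

Ltac solve_IS k :=
  apply (gr_IS _ _ _ k); [intros q; destruct q; simpl; lia | intros n Hn; lia].

Definition runc (s : config) (gs : list graph) : config := fold_left step gs s.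

Lemma stepIH (P : config -> Prop) R s G :
  (forall gs, length gs = S R -> Forall is_IS_graph gs -> P (runc s gs)) ->
  is_IS_graph G ->
  (forall gs, length gs = R -> Forall is_IS_graph gs -> P (runc (step s G) gs)).
Proof.
  intros H HG gs L F. apply (H (G :: gs)); simpl; auto.
Qed.

Ltac use R G k IH H s :=
      let h := fresh "h" in
      pose proof (IH (step s G) (stepIH _ R s G H ltac:(solve_IS k))) as h;
      unfold step, msg, gr in h; simpl in h.

Section D.
Variable d : agent -> lstate -> bool.

Definition MA (s : config) := majority_agreement (fun i => d i (s i)).

Lemma inv : forall R s,
  (forall gs, length gs = R -> Forall is_IS_graph gs -> MA (runc s gs)) ->
  K d R Ag_a Ag_b (s Ag_a) (s Ag_b) = K d R Ag_c Ag_a (s Ag_c) (s Ag_a) /\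
  K d R Ag_b Ag_c (s Ag_b) (s Ag_c) = K d R Ag_c Ag_a (s Ag_c) (s Ag_a).
Proof.
  induction R as [|R IH]; intros s H.
  - specialize (H [] eq_refl (Forall_nil _)). unfold MA, majority_agreement in H.
    simpl in *. destruct (d Ag_a (s Ag_a)), (d Ag_b (s Ag_b)), (d Ag_c (s Ag_c));
      simpl in *; destruct H as [[H1 H2]|H]; try discriminate; try lia; auto.
  -     use R (gr 0 1 2) 3 IH H s.
    use R (gr 0 2 1) 3 IH H s.
    use R (gr 0 1 1) 2 IH H s.
    use R (gr 1 0 2) 3 IH H s.
    use R (gr 2 0 1) 3 IH H s.
    use R (gr 1 0 1) 2 IH H s.
    use R (gr 1 2 0) 3 IH H s.
    use R (gr 2 1 0) 3 IH H s.
    use R (gr 1 1 0) 2 IH H s.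
    use R (gr 0 0 1) 2 IH H s.
    use R (gr 0 1 0) 2 IH H s.
    use R (gr 1 0 0) 2 IH H s.
    use R (gr 0 0 0) 1 IH H s.
    simpl; unfold v2; simpl. lia.
Qed.

Lemma run_app x gs G i : run x (gs ++ [G]) i = step (run x gs) G i.
Proof. unfold run. rewrite fold_left_app. reflexivity. Qed.

Lemma KT Rtot x
  (Hv : forall gs, length gs = Rtot -> Forall is_IS_graph gs ->
        validity x (fun i => d i (run x gs i)))
  (Hx : forall i, x i = true) :
  forall R' k u v, k + R' = Rtot ->
  (exists gs, length gs = k /\ Forall is_IS_graph gs /\
     run x gs Ag_a = u /\ run x gs Ag_b = v) ->
  K d R' Ag_a Ag_b u v = 1%Z.
Proof.
  induction R' as [|R' IH]; intros k u v Hk [gs [L [F [Ea Eb]]]].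
  - assert (L' : length gs = Rtot) by lia.
    destruct (Hv gs L' F Ag_a) as [j1 E1].
    destruct (Hv gs L' F Ag_b) as [j2 E2].
    simpl in E1, E2. rewrite Hx in E1, E2. subst u v. simpl. rewrite E1, E2. reflexivity.
  - subst u v.
    assert (HG : forall G, is_IS_graph G ->
      K d R' Ag_a Ag_b (step (run x gs) G Ag_a) (step (run x gs) G Ag_b) = 1%Z).
    { intros G HG. apply (IH (S k)); [lia|]. exists (gs ++ [G]).
      split; [rewrite length_app; simpl; lia|].
      split; [apply Forall_app; auto|]. split; apply run_app. }
    pose proof (HG (gr 0 1 2) ltac:(solve_IS 3)) as h1.
    pose proof (HG (gr 0 0 1) ltac:(solve_IS 2)) as h2.
    pose proof (HG (gr 1 0 2) ltac:(solve_IS 3)) as h3.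
    unfold step, msg, gr in h1, h2, h3; simpl in h1, h2, h3.
    cbn [K]. unfold v2; simpl. lia.
Qed.

Lemma KF Rtot x
  (Hv : forall gs, length gs = Rtot -> Forall is_IS_graph gs ->
        validity x (fun i => d i (run x gs i)))
  (Hx : forall i, x i = false) :
  forall R' k u v, k + R' = Rtot ->
  (exists gs, length gs = k /\ Forall is_IS_graph gs /\
     run x gs Ag_c = u /\ run x gs Ag_a = v) ->
  K d R' Ag_c Ag_a u v = 0%Z.
Proof.
  induction R' as [|R' IH]; intros k u v Hk [gs [L [F [Ea Eb]]]].
  - assert (L' : length gs = Rtot) by lia.
    destruct (Hv gs L' F Ag_c) as [j1 E1].
    simpl in E1. rewrite Hx in E1. subst u v. simpl. rewrite E1. reflexivity.
  - subst u v.
    assert (HG : forall G, is_IS_graph G ->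
      K d R' Ag_c Ag_a (step (run x gs) G Ag_c) (step (run x gs) G Ag_a) = 0%Z).
    { intros G HG. apply (IH (S k)); [lia|]. exists (gs ++ [G]).
      split; [rewrite length_app; simpl; lia|].
      split; [apply Forall_app; auto|]. split; apply run_app. }
    pose proof (HG (gr 1 2 0) ltac:(solve_IS 3)) as h1.
    pose proof (HG (gr 0 1 0) ltac:(solve_IS 2)) as h2.
    pose proof (HG (gr 0 2 1) ltac:(solve_IS 3)) as h3.
    unfold step, msg, gr in h1, h2, h3; simpl in h1, h2, h3.
    cbn [K]. unfold v2; simpl. lia.
Qed.
End D.

Theorem mainTheorem1 :
  forall R : nat,
    ~ exists delta : agent -> lstate -> bool,
        forall (x : agent -> bool) (gs : list graph),
          length gs = R ->
          Forall is_IS_graph gs ->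
          majority_agreement (fun i => delta i (run x gs i)) /\
          validity x (fun i => delta i (run x gs i)).
Proof.
  intros R [d H].
  set (x110 := fun i => match i with Ag_c => false | _ => true end).
  set (x010 := fun i => match i with Ag_b => true | _ => false end).
  destruct (inv d R (fun i => Inp (x110 i))) as [E1 E2].
  { intros gs L F. apply (H x110 gs L F). }
  destruct (inv d R (fun i => Inp (x010 i))) as [_ E3].
  { intros gs L F. apply (H x010 gs L F). }
  simpl in E1, E2, E3.
  assert (T : K d R Ag_a Ag_b (Inp true) (Inp true) = 1%Z).
  { apply (KT d R (fun _ => true)) with (k := 0).
    - intros gs L F. apply (H _ gs L F).
    - reflexivity.
    - lia.
    - exists []. repeat split; constructor. }
  assert (Z0 : K d R Ag_c Ag_a (Inp false) (Inp false) = 0%Z).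
  { apply (KF d R (fun _ => false)) with (k := 0).
    - intros gs L F. apply (H _ gs L F).
    - reflexivity.
    - lia.
    - exists []. repeat split; constructor. }
  lia.
Qed.
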